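(* For $n\ge1$, the upper left $n\times n$ block of $M_n$ has $(i,j)$ entry equal to $1$ if $i=n$; equal to $1$ if $i\neq n$ and $j\le n-i$; and equal to $2$ if $i\ne n$ and $j>n-i$.
   Context: Lagrangian Grassmannian: $X=\mathrm{LGr}(n,2n)$, the $n$-dimensional subspaces of $\mathbb C^{2n}$ Lagrangian for $\omega_{ij}=(-1)^j\delta_{i,2n+1-j}$, in its Plücker embedding; $\mathbb C[X]$ its homogeneous coordinate ring. Plücker coordinates $p_I$ ($I$ an $n$-subset of $[2n]$) are indexed by Young diagrams in the $n\times n$ square: along the lattice path from the upper right to the lower left corner with unit steps (down or left) labelled $1,\dots,2n$, $\lambda_I$ is the diagram above the path whose vertical steps are labelled by $I$; $p_{\lambda_I}=p_I$. Valuation: for $0\le a,b\le n$ let $\mu_{a,b}=(n^a,b^{n-a})$; $\mu_{a,b}^T=\mu_{b,a}$. The co-rectangles symmetric plabic graph $G=G^{\text{co-rect}}_n$ is a reduced plabic graph with boundary vertices $1,\dots,2n$ clockwise, symmetric (in Karpman's sense) with respect to a diameter $d$ with endpoints between $2n$ and $1$ and between $n$ and $n+1$, whose faces (Rietsch–Williams labelling, translated to Young diagrams) are exactly the $\mu_{a,b}$, reflection in $d$ exchanging faces $\mu,\mu^T$. With $O$ the unique perfect orientation with source set $\{1,\dots,n\}$, the flow polynomial $P_J$ is the sum over flows from $[n]$ to $J$ (vertex-disjoint paths from $[n]\setminus J$ to $J\setminus[n]$) of the product over paths of the face variables $x_\mu$ to the left of the path. With $x_\mu=x_{\mu^T}$,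 $p_J\mapsto P_J$ embeds $\mathbb C[X]$ into Laurent polynomials; $\mathrm{val}_{\text{co-rect}}(f)$ is the exponent vector of the lexicographically minimal term (for a fixed total order of variables), with coordinates indexed by transpose-orbits of nonempty face labels, so values lie in $\mathbb Z^{\binom{n+1}{2}}$. Matrix $M_n$: for $0\le i\le j\le n-1$ let $\lambda^{(i,j)}=(n^j,(n-1)^{n-1-j},i)$. $M_n$ is the $\binom{n+1}{2}\times\binom{n+1}{2}$ matrix whose columns are $\mathrm{val}_{\text{co-rect}}(p_{\lambda^{(i,j)}})$, ordered by $(i,j)<(i',j')$ iff $i<i'$, or $i=i'$ and $j>j'$; rows are indexed by the transpose-orbits of nonempty face labels, represented by $n$-subsets of $[2n]$, ordered so that the subset with the larger entry at the first difference (comparing largest elements, then second largest, etc.) comes first. (In particular the first $n$ rows are indexed by $(n^k)$, $k=1,\dots,n-1$, and the hook $(n,1^{n-1})$.) *)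

(* Defs.v *)
From HB Require Import structures.
From mathcomp Require Import all_boot all_order all_algebra.
From mathcomp Require Import mpoly.

Set Implicit Arguments.
Unset Strict Implicit.
Unset Printing Implicit Defensive.

Import GRing.Theory.

(* Young diagrams in the n x n square are encoded by their n row lengths     *)
(* (weakly decreasing, padded with zeros).                                   *)

Definition mu (n a b : nat) : seq nat := nseq a n ++ nseq (n - a) b.

Definition transp (n : nat) (l : seq nat) : seq nat :=
  [seq count (fun x => c < x) l | c <- iota 0 n].

(* The n-subset I of [2n] with lambda_I = l: along the lattice path from the
   upper right to the lower left corner (steps labelled 1..2n), the vertical
   step bordering row r (1-based) has label r + (n - l_r). *)
Definition subset_of (n : nat) (l : seq nat) : seq nat :=
  [seq r.+1 + (n - nth 0 l r) | r <- iota 0 n].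

Fixpoint lexlt (s t : seq nat) : bool :=
  match s, t with
  | x :: s', y :: t' => (x < y) || ((x == y) && lexlt s' t')
  | [::], _ :: _ => true
  | _, _ => false
  end.
Definition lexle (s t : seq nat) : bool := ~~ lexlt t s.

Definition lexmin (s : seq (seq nat)) : option (seq nat) :=
  foldr (fun x acc => if acc is Some y then Some (if lexle x y then x else y)
                      else Some x) None s.

(* Rows: transpose-orbits of nonempty face labels, ordered as in the paper.  *)
(* An n-subset is compared through its elements listed in decreasing order  *)
(* (largest first); an orbit {mu, mu^T} is represented by the larger of its  *)
(* two subsets, and the orbit with the larger representative comes first.   *)

Definition dkey (n : nat) (l : seq nat) : seq nat := rev (subset_of n l).

Definition orep (n : nat) (l : seq nat) : seq nat :=
  if lexlt (dkey n l) (dkey n (transp n l)) then dkey n (transp n l)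
  else dkey n l.

(* the face labels of G^{co-rect}_n : all mu_{a,b}, 0 <= a,b <= n *)
Definition face_labels (n : nat) : seq (seq nat) :=
  flatten [seq [seq mu n a b | b <- iota 0 n.+1] | a <- iota 0 n.+1].

Definition nonempty (l : seq nat) : bool := has (fun x => 0 < x) l.

Definition rows (n : nat) : seq (seq nat) :=
  sort (fun u v => lexle v u)
       (undup [seq orep n l | l <- face_labels n & nonempty l]).

(* The co-rectangles plabic graph G = G^{co-rect}_n with its perfect         *)
(* orientation O (source set {1,..,n}).                                      *)
(* Picture the n x n grid of boxes (r,c), 1 <= r,c <= n, r counted from the *)
(* top and c from the left.  Each box carries a black vertex Blk r c and a   *)
(* white vertex Wht r c joined by an edge.  Edges: Blk r c -- Wht r c;       *)
(* Wht r c -- Blk (r-1) c (north neighbour); Wht r c -- Blk r (c+1) (east   *)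
(* neighbour).  Boundary vertices (clockwise): 1,..,n along the bottom side *)
(* from right to left, with Bd s -- Blk n (n+1-s); then n+1,..,2n down the  *)
(* right side, with Wht r n -- Bd (n+r).  The unique perfect orientation    *)
(* with source set [n] (each black vertex has exactly one outgoing edge,    *)
(* each white vertex exactly one incoming edge) orients every edge          *)
(* northwards / eastwards, as encoded in [edge] below.                       *)
(* Faces: for 0 <= x,y <= n let F(x,y) be the region between the column    *)
(* lines c = x and c = x+1 and the row lines r = y and r = y+1 (all F(x,y)  *)
(* with x = 0 or y = 0 form one single face, the one between boundary      *)
(* vertices n and n+1).  With the Rietsch-Williams labelling (i is put in  *)
(* the label of every face to the left of the trip starting at i, trips    *)
(* turning maximally right at black and maximally left at white vertices)  *)
(* the face F(x,y) is labelled mu_{n-x,n-y}.  Reflection in the diagonal   *)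
(* from the corner between 2n and 1 (bottom right) to the corner between   *)
(* n and n+1 (top left) maps G to itself with colours swapped and exchanges*)
(* F(x,y) and F(y,x), i.e. mu and mu^T.                                     *)

Inductive vtx : Type :=
| Bd of nat
| Blk of nat & nat
| Wht of nat & nat.

Definition vtx_code (v : vtx) : nat * nat * nat :=
  match v with Bd i => (0, i, 0) | Blk r c => (1, r, c) | Wht r c => (2, r, c) end.
Definition vtx_decode (x : nat * nat * nat) : vtx :=
  match x with
  | (0, i, _) => Bd i | (1, r, c) => Blk r c | (_, r, c) => Wht r c end.
Lemma vtx_codeK : cancel vtx_code vtx_decode. Proof. by case. Qed.
HB.instance Definition _ := Equality.copy vtx (can_type vtx_codeK).

Definition edge (n : nat) (u v : vtx) : bool :=
  match u, v with
  | Bd s, Blk r c => [&& 1 <= s <= n, r == n & c == n.+1 - s]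
  | Blk r c, Wht r' c' => [&& 1 <= r <= n, 1 <= c <= n, r' == r & c' == c]
  | Wht r c, Blk r' c' =>
      [&& 1 <= r <= n, 1 <= c <= n &
          [&& 1 < r, r' == r.-1 & c' == c] || [&& c < n, r' == r & c' == c.+1]]
  | Wht r c, Bd t => [&& 1 <= r <= n, c == n & t == n + r]
  | _, _ => false
  end.

Definition verts (n : nat) : seq vtx :=
  [seq Bd i | i <- iota 1 (2 * n)] ++
  flatten [seq flatten [seq [:: Blk r c; Wht r c] | c <- iota 1 n] | r <- iota 1 n].

Definition succs (n : nat) (v : vtx) : seq vtx := [seq w <- verts n | edge n v w].

(* The fuel
   exceeds the number of vertices, so (O being acyclic) nothing is cut off. *)
Fixpoint paths_from (n fuel : nat) (v : vtx) : seq (seq vtx) :=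
  match fuel with
  | 0 => [::]
  | fuel'.+1 =>
      flatten [seq (if w is Bd _ then [:: [:: w]]
                    else [seq w :: p | p <- paths_from n fuel' w]) | w <- succs n v]
  end.

Definition paths (n s : nat) : seq (seq vtx) :=
  [seq Bd s :: p | p <- paths_from n (2 * n * n + 2) (Bd s)].

Fixpoint cprod (T : Type) (ss : seq (seq T)) : seq (seq T) :=
  match ss with
  | [::] => [:: [::]]
  | s :: ss' => flatten [seq [seq x :: f | f <- cprod ss'] | x <- s]
  end.

Definition sources (n : nat) (J : seq nat) : seq nat := [seq s <- iota 1 n | s \notin J].
Definition sinks (n : nat) (J : seq nat) : seq nat := [seq t <- J | n < t].

Definition flows (n : nat) (J : seq nat) : seq (seq (seq vtx)) :=
  [seq F <- cprod [seq paths n s | s <- sources n J]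
     | perm_eq [seq last (Bd 0) P | P <- F] [seq Bd t | t <- sinks n J]
       && uniq (flatten F)].

(* position in the grid: box (r,c); boundary sources sit just below the grid,
   boundary sinks just right of it *)
Definition pos (n : nat) (v : vtx) : nat * nat :=
  match v with
  | Bd i => if i <= n then (n.+1, n.+1 - i) else (i - n, n.+1)
  | Blk r c => (r, c)
  | Wht r c => (r, c)
  end.

(* Labels of the faces to the left of a path P (paths run north/east from
   the bottom side to the right side, so the faces to their left are those
   lying north-west of them): F(x,y) is to the left of P iff some point of P
   lies strictly south-east of F(x,y). *)
Definition left_faces (n : nat) (P : seq vtx) : seq (seq nat) :=
  undup (flatten [seq [seq mu n (n - x) (n - y) |
                        y <- iota 0 n.+1 & has (fun v => (y < (pos n v).1) && (x < (pos n v).2)) P]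
                  | x <- iota 0 n.+1]).

(* number of variables = number of transpose-orbits of nonempty labels *)
Definition nvar (n : nat) : nat := 'C(n.+1, 2).

(* exponent of the i-th orbit variable in the weight of the flow F
   (face variables x_mu = x_{mu^T}; the empty face carries no variable) *)
Definition flow_exp (n : nat) (F : seq (seq vtx)) (i : nat) : nat :=
  \sum_(P <- F) count (fun l => nonempty l && (orep n l == nth [::] (rows n) i))
                      (left_faces n P).

Definition flow_mon (n : nat) (F : seq (seq vtx)) : 'X_{1..nvar n} :=
  [multinom flow_exp n F i | i < nvar n].

Definition flowpoly (n : nat) (J : seq nat) : {mpoly int[nvar n]} :=
  \sum_(F <- flows n J) 'X_[flow_mon n F].

(* val_{co-rect}(p_J): exponent vector of the lexicographically minimal
   term of P_J, variables ordered as the rows (first row most significant) *)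
Definition val_corect (n : nat) (J : seq nat) : seq nat :=
  odflt [::] (lexmin [seq [seq (m : 'X_{1..nvar n}) i | i <- enum 'I_(nvar n)]
                     | m <- msupp (flowpoly n J)]).

(* columns: lambda^{(i,j)} = (n^j, (n-1)^(n-1-j), i), 0 <= i <= j <= n-1, in
   the order (i,j) < (i',j') iff i < i' or (i = i' and j > j') *)
Definition col_index (n : nat) : seq (nat * nat) :=
  flatten [seq [seq (i, j) | j <- rev (iota i (n - i))] | i <- iota 0 n].

Definition lam (n i j : nat) : seq nat := nseq j n ++ nseq (n - 1 - j) (n - 1) ++ [:: i].

(* the matrix M_n (entries indexed from 0) *)
Definition Mn (n : nat) : 'M[nat]_(nvar n) :=
  \matrix_(r < nvar n, c < nvar n)
    let ij := nth (0, 0) (col_index n) c in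
    nth 0 (val_corect n (subset_of n (lam n ij.1 ij.2))) r.

(* Main.v *)
Require Import Defs.
From mathcomp Require Import all_boot all_order all_algebra.
From mathcomp Require Import mpoly.
From mathcomp Require Import zify.
Set Implicit Arguments.
Unset Strict Implicit.
Unset Printing Implicit Defensive.

Lemma lexlt_irr s : lexlt s s = false.
Proof. by elim: s => //= x s ->; rewrite ltnn eqxx. Qed.

Lemma lexlt_asym s t : lexlt s t -> lexlt t s = false.
Proof.
elim: s t => [|x s IH] [|y t] //=.
case/orP => [lt| /andP[/eqP-> h]].
  by rewrite ltnNge (ltnW lt) /= gtn_eqF.
by rewrite ltnn eqxx /= IH.
Qed.

Lemma lexlt_trans s t u : lexlt s t -> lexlt t u -> lexlt s u.
Proof.
elim: s t u => [|x s IH] [|y t] [|z u] //=.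
case/orP => [h1| /andP[/eqP-> h1]]; case/orP => [h2| /andP[/eqP<- h2]].
- by rewrite (ltn_trans h1 h2).
- by rewrite h1.
- by rewrite h2.
- by rewrite eqxx (IH _ _ h1 h2) orbT.
Qed.

Lemma lexlt_total s t : s != t -> lexlt s t || lexlt t s.
Proof.
elim: s t => [|x s IH] [|y t] //=.
case: (ltngtP x y) => //= -> /=; rewrite eqseq_cons eqxx /=; exact: IH.
Qed.

Lemma lexlt_le_trans s t u : lexlt s t -> ~~ lexlt u t -> lexlt s u.
Proof.
move=> h1 h2; case: (eqVneq t u) => [<-//|ne].
case/orP: (lexlt_total ne) => h; first exact: lexlt_trans h1 h.
by rewrite h in h2.
Qed.

Lemma lexle_trans : transitive (fun u v => lexle v u).
Proof.
move=> y x z; rewrite /lexle => h1 h2.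
apply/negP => h3.
case: (eqVneq y z) => [e|ne]; first by subst; rewrite h3 in h1.
case/orP: (lexlt_total ne) => h; first by rewrite h in h2.
by rewrite (lexlt_trans h3 h) in h1.
Qed.

Lemma lex_witness (f g : nat -> nat) m N k :
  m <= k < m + N -> f k < g k -> (forall k', m <= k' < k -> f k' = g k') ->
  lexlt (map f (iota m N)) (map g (iota m N)).
Proof.
elim: N m => [|N IH] m; first by lia.
move=> hk hlt heq /=.
case: (eqVneq k m) => [e|ne]; first by subst; rewrite hlt.
rewrite heq; last by lia.
rewrite ltnn eqxx /=; apply: (IH _ _ hlt) => [|k' hk']; first by lia.
apply: heq; lia.
Qed.

Definition Hf (n a b k : nat) : nat := if k < n - a then n + n - b - k else n - k.

Lemma size_mu n a b : a <= n -> size (mu n a b) = n.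
Proof. by move=> h; rewrite /mu size_cat !size_nseq; lia. Qed.

Lemma nth_mu n a b r : a <= n -> r < n -> nth 0 (mu n a b) r = if r < a then n else b.
Proof.
move=> ha hr; rewrite /mu nth_cat size_nseq; case: ifP => h; rewrite nth_nseq ?h //.
by have -> : r - a < n - a by lia.
Qed.

Lemma dkey_mu n a b : a <= n -> b <= n -> dkey n (mu n a b) = map (Hf n a b) (iota 0 n).
Proof.
move=> ha hb; apply: (@eq_from_nth _ 0); first by rewrite size_rev !size_map !size_iota.
move=> k; rewrite size_rev size_map size_iota => hk.
rewrite /dkey /subset_of nth_rev ?size_map ?size_iota //.
rewrite !(nth_map 0) ?size_iota; try lia.
rewrite !nth_iota; try lia.
rewrite nth_mu //; last by lia.
rewrite /Hf; case: (ltnP (0 + (n - k.+1)) a) => h1; case: (ltnP (0 + k) (n - a)) => h2; lia.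
Qed.

Lemma transp_mu n a b : a <= n -> b <= n -> transp n (mu n a b) = mu n b a.
Proof.
move=> ha hb; apply: (@eq_from_nth _ 0); first by rewrite size_map size_iota size_mu.
move=> c; rewrite size_map size_iota => hc.
rewrite (nth_map 0) ?size_iota // nth_iota // nth_mu //.
rewrite /mu count_cat !count_nseq /= add0n hc mul1n.
by case: (ltnP c b) => h; rewrite ?mul1n ?mul0n; lia.
Qed.

Lemma nonempty_mu n a b : 1 <= n -> a <= n -> nonempty (mu n a b) = (0 < a) || (0 < b).
Proof.
move=> hn ha; rewrite /nonempty has_cat !has_nseq.
case: a ha => [|a] ha /=; last by rewrite hn.
by rewrite subn0 hn.
Qed.

Lemma all_mu n a b : b <= n -> all (fun x => x <= n) (mu n a b).
Proof. by move=> hb; rewrite /mu all_cat !all_nseq leqnn hb !orbT. Qed.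

Lemma dkey_inj n l l' : size l = n -> size l' = n ->
  all (fun x => x <= n) l -> all (fun x => x <= n) l' -> dkey n l = dkey n l' -> l = l'.
Proof.
move=> s1 s2 a1 a2 /(inv_inj (@revK _)) e.
apply: (@eq_from_nth _ 0); first by rewrite s1 s2.
move=> r; rewrite s1 => hr.
have := congr1 (fun s => nth 0 s r) e; rewrite /= !(nth_map 0) ?size_iota // nth_iota //.
have h1 := all_nthP 0 a1 r; have h2 := all_nthP 0 a2 r.
rewrite s1 in h1; rewrite s2 in h2; have := h1 hr; have := h2 hr. rewrite !add0n; lia.
Qed.

Lemma mu_dkey_inj n a b c d : a <= n -> b <= n -> c <= n -> d <= n ->
  dkey n (mu n a b) = dkey n (mu n c d) -> mu n a b = mu n c d.
Proof.
move=> ha hb hc hd; apply: dkey_inj; by rewrite ?size_mu ?all_mu.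
Qed.

Lemma orep_lt n x l :
  lexlt x (orep n l) = lexlt x (dkey n l) || lexlt x (dkey n (transp n l)).
Proof.
rewrite /orep; case: ifP => h.
  apply/idP/idP => [->|/orP[h'|//]]; first by rewrite orbT.
  exact: lexlt_trans h' h.
apply/idP/idP => [->//|/orP[//|h']].
apply: (lexlt_le_trans h'); by rewrite h.
Qed.

Lemma orep_sym n a b : a <= n -> b <= n -> orep n (mu n a b) = orep n (mu n b a).
Proof.
move=> ha hb; rewrite /orep !transp_mu //.
set D1 := dkey n (mu n a b); set D2 := dkey n (mu n b a).
case: (eqVneq D1 D2) => [->|ne]; first by rewrite lexlt_irr.
case/orP: (lexlt_total ne) => h; first by rewrite h (lexlt_asym h).
by rewrite h (lexlt_asym h).
Qed.

Lemma orep_cases n l : orep n l = dkey n l \/ orep n l = dkey n (transp n l).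
Proof. rewrite /orep; case: ifP; auto. Qed.

Lemma orep_mu_eq n a b c d : a <= n -> b <= n -> c <= n -> d <= n ->
  (orep n (mu n a b) == orep n (mu n c d)) = (mu n a b == mu n c d) || (mu n a b == mu n d c).
Proof.
move=> ha hb hc hd; apply/idP/idP.
  move/eqP => e.
  have T1 : forall x y z w, x <= n -> y <= n -> z <= n -> w <= n ->
     dkey n (mu n x y) = dkey n (mu n z w) -> mu n x y = mu n z w.
    by move=> *; apply: mu_dkey_inj.
  have tt : forall x y z w, x <= n -> y <= n -> z <= n -> w <= n ->
     mu n x y = mu n z w -> mu n y x = mu n w z.
    by move=> x y z w ? ? ? ? e'; rewrite -transp_mu // e' transp_mu.
  case: (orep_cases n (mu n a b)) => e1; case: (orep_cases n (mu n c d)) => e2;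
    rewrite ?transp_mu // in e1 e2; rewrite e1 e2 in e.
  - by rewrite (T1 _ _ _ _ ha hb hc hd e) eqxx.
  - by rewrite (T1 _ _ _ _ ha hb hd hc e) eqxx orbT.
  - by rewrite (tt _ _ _ _ hb ha hc hd (T1 _ _ _ _ hb ha hc hd e)) eqxx orbT.
  - by rewrite (tt _ _ _ _ hb ha hd hc (T1 _ _ _ _ hb ha hd hc e)) eqxx.
case/orP => /eqP e.
  by rewrite e.
by rewrite e orep_sym.
Qed.

Ltac hf := rewrite /Hf; repeat match goal with |- context [if ?x < ?y then _ else _] =>
  case: (ltnP x y) => ? end; lia.

Lemma index_count s x : sorted (fun u v => lexle v u) s -> uniq s -> x \in s ->
  index x s = count (lexlt x) s.
Proof.
elim: s => //= y s IH srt /andP[ny us] xin.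
have allle : all (fun z => lexle z y) s.
  exact: (order_path_min lexle_trans srt).
case: (eqVneq y x) => [e|ne].
  subst y; rewrite lexlt_irr /= (@eq_in_count _ _ pred0) ?count_pred0 //.
  by move=> z /(allP allle); rewrite /lexle => /negbTE.
rewrite in_cons eq_sym (negbTE ne) /= in xin.
have lt : lexlt x y.
  case/orP: (lexlt_total (negbT (negbTE ne))) => // h.
  by move: (allP allle x xin); rewrite /lexle h.
by rewrite lt IH // (path_sorted srt).
Qed.

Lemma rows_sorted n : sorted (fun u v => lexle v u) (rows n).
Proof.
apply: sort_sorted => u v; rewrite /lexle.
case h: (lexlt v u); case h2: (lexlt u v) => //; by rewrite (lexlt_asym h) in h2.
Qed.

Lemma rows_uniq n : uniq (rows n).
Proof. by rewrite sort_uniq undup_uniq. Qed.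

Lemma nth_rows n x i : x \in rows n -> count (lexlt x) (rows n) = i -> nth [::] (rows n) i = x.
Proof.
move=> xin; rewrite -index_count // ?rows_sorted ?rows_uniq // => <-.
exact: nth_index.
Qed.

Definition MM n := [seq orep n l | l <- face_labels n & nonempty l].

Lemma count_rows n P : count P (rows n) = size (undup [seq y <- MM n | P y]).
Proof.
by rewrite /rows (permP (permEl (perm_sort _ _)) P) -filter_undup -size_filter.
Qed.

Lemma mem_FL n l : l \in face_labels n <-> exists a b, [/\ a <= n, b <= n & l = mu n a b].
Proof.
split.
  case/flatten_mapP => a; rewrite mem_iota => ha /mapP[b]; rewrite mem_iota => hb ->.
  by exists a, b; split => //; lia.
case=> a [b [ha hb ->]]; apply/flatten_mapP; exists a; first by rewrite mem_iota; lia.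
by apply/map_f; rewrite mem_iota; lia.
Qed.

Lemma mem_MM n y : y \in MM n <->
  exists a b, [/\ a <= n, b <= n, nonempty (mu n a b) & y = orep n (mu n a b)].
Proof.
split.
  case/mapP => l; rewrite mem_filter => /andP[ne /mem_FL [a [b [ha hb e]]]] ->.
  by exists a, b; subst.
case=> a [b [ha hb ne ->]]; apply/map_f; rewrite mem_filter ne /=.
by apply/mem_FL; exists a, b.
Qed.

Lemma mu_eq_nth n a b c d : a <= n -> c <= n -> mu n a b = mu n c d ->
  forall r, r < n -> (if r < a then n else b) = (if r < c then n else d).
Proof. by move=> ha hc e r hr; rewrite -!nth_mu // e. Qed.

Lemma count_rows_T n x m : 1 <= n -> m < n -> x \in rows n ->
  (forall a b, a <= n -> b <= n -> 0 < a + b ->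
    (lexlt x (orep n (mu n a b)) <-> exists2 k, 1 <= k <= m & orep n (mu n a b) = orep n (mu n k 0))) ->
  nth [::] (rows n) m = x.
Proof.
move=> hn hm xin HX; apply: nth_rows => //.
rewrite count_rows.
set T := [seq orep n (mu n k 0) | k <- iota 1 m].
have uT : uniq T.
  rewrite map_inj_in_uniq ?iota_uniq // => k k'; rewrite !mem_iota => hk hk' /eqP.
  rewrite orep_mu_eq; try lia.
  case/orP => /eqP e.
    have h1 := @mu_eq_nth n k 0 k' 0 ltac:(lia) ltac:(lia) e k ltac:(lia).
    have h2 := @mu_eq_nth n k 0 k' 0 ltac:(lia) ltac:(lia) e k' ltac:(lia).
    rewrite ltnn in h1; rewrite ltnn in h2; move: h1 h2.
    by case: (ltnP k k'); case: (ltnP k' k); lia.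
  have h1 := @mu_eq_nth n k 0 0 k' ltac:(lia) ltac:(lia) e n.-1 ltac:(lia).
  rewrite ltn0 in h1; move: h1.
  by case: (ltnP n.-1 k); lia.
have -> : size (undup [seq y <- MM n | lexlt x y]) = size T.
  apply: perm_size; apply: uniq_perm; rewrite ?undup_uniq // => y.
  rewrite mem_undup mem_filter; apply/idP/idP.
    case/andP => lt /mem_MM [a [b [ha hb ne e]]].
    rewrite nonempty_mu // in ne.
    subst y; case/(HX a b ha hb ltac:(lia)): lt => k hk ->.
    by apply/map_f; rewrite mem_iota; lia.
  case/mapP => k; rewrite mem_iota => hk ->.
  apply/andP; split.
    by apply/(HX k 0); [lia|lia|lia|exists k => //; lia].
  by apply/mem_MM; exists k, 0; split => //; [lia|rewrite nonempty_mu //; lia].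
by rewrite size_map size_iota.
Qed.

Ltac wit k := apply: (@lex_witness _ _ 0 _ k); [lia | hf | move=> ? ?; hf].

Lemma orep_mu_c0 n c : 1 <= c -> c < n -> orep n (mu n c 0) = dkey n (mu n c 0).
Proof.
move=> h1 h2; rewrite /orep transp_mu; try lia.
rewrite !dkey_mu; try lia.
have h : lexlt (map (Hf n 0 c) (iota 0 n)) (map (Hf n c 0) (iota 0 n)) by wit 0.
by rewrite (lexlt_asym h).
Qed.

Lemma orep_mu_11 n : 1 <= n -> orep n (mu n 1 1) = dkey n (mu n 1 1).
Proof. by move=> h; rewrite /orep transp_mu //; case: ifP. Qed.

Lemma lexA n c a b : 1 <= c -> c < n -> a <= n -> b <= n ->
  lexlt (dkey n (mu n c 0)) (dkey n (mu n a b)) = (b == 0) && (a < c).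
Proof.
move=> h1 h2 ha hb; rewrite !dkey_mu //; try lia.
case: (eqVneq b 0) => hb0 /=.
  subst b; case: (ltngtP a c) => h.
  - by wit (n - c).
  - by apply: lexlt_asym; wit (n - a).
  - by subst; rewrite lexlt_irr.
by apply: lexlt_asym; wit 0.
Qed.

Lemma lexB n a b : 1 <= n -> a <= n -> b <= n ->
  lexlt (dkey n (mu n 1 1)) (dkey n (mu n a b)) ->
  (b = 0 /\ a < n) \/ (a = 0 /\ b = 1 /\ 2 <= n).
Proof.
move=> hn ha hb; rewrite !dkey_mu //.
have eqc : (forall k, k < n -> Hf n a b k = Hf n 1 1 k) ->
   lexlt (map (Hf n 1 1) (iota 0 n)) (map (Hf n a b) (iota 0 n)) -> False.
  move=> H; have -> : map (Hf n a b) (iota 0 n) = map (Hf n 1 1) (iota 0 n).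
    by apply/eq_in_map => k; rewrite mem_iota => hk; apply: H; lia.
  by rewrite lexlt_irr.
have ltc : lexlt (map (Hf n a b) (iota 0 n)) (map (Hf n 1 1) (iota 0 n)) ->
   lexlt (map (Hf n 1 1) (iota 0 n)) (map (Hf n a b) (iota 0 n)) -> False.
  by move=> h1 h2; rewrite (lexlt_asym h1) in h2.
move=> L.
case: (eqVneq b 0) => hb0.
  subst b; case: (ltnP a n) => han; first by left.
  exfalso; case: (ltnP 1 n) => hn2.
    by apply: (ltc _ L); wit 0.
  by apply: (eqc _ L) => k hk; hf.
case: (ltnP 1 b) => hb1.
  exfalso; apply: (ltc _ L); wit 0.
have hb1' : b = 1 by lia.
subst b.
case: (eqVneq a 0) => ha0.
  subst a; case: (ltnP 1 n) => hn2; first by right.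
  by exfalso; apply: (eqc _ L) => k hk; hf.
exfalso; case: (eqVneq a 1) => ha1.
  by subst a; rewrite lexlt_irr in L.
by apply: (ltc _ L); wit (n - a).
Qed.

Lemma lexB' n a : 1 <= a -> a < n ->
  lexlt (dkey n (mu n 1 1)) (dkey n (mu n a 0)).
Proof. move=> h1 h2; rewrite !dkey_mu; try lia; wit 0. Qed.

Lemma orep_in_rows n a b : a <= n -> b <= n -> 1 <= n -> 0 < a + b ->
  orep n (mu n a b) \in rows n.
Proof.
move=> ha hb hn hab; rewrite mem_sort mem_undup; apply/mem_MM; exists a, b; split => //.
rewrite nonempty_mu //; lia.
Qed.

Lemma row_c n c : 1 <= c -> c < n -> nth [::] (rows n) c.-1 = orep n (mu n c 0).
Proof.
move=> h1 h2; apply: count_rows_T; try lia.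
  by apply: orep_in_rows; lia.
move=> a b ha hb hab; split.
  rewrite orep_lt transp_mu // orep_mu_c0 // !lexA //.
  case/orP => /andP[/eqP hb0 hac]; subst.
    by exists a => //; lia.
  by exists b; [lia | rewrite orep_sym].
case=> k hk ->; rewrite orep_lt transp_mu; try lia.
by rewrite orep_mu_c0 // lexA //; try lia; rewrite eqxx /=; apply/orP; left; lia.
Qed.

Lemma row_hook n : 1 <= n -> nth [::] (rows n) n.-1 = orep n (mu n 1 1).
Proof.
move=> hn; apply: count_rows_T; try lia.
  by apply: orep_in_rows; lia.
move=> a b ha hb hab; split.
  rewrite orep_lt transp_mu // orep_mu_11 //.
  case/orP => L; [move: (lexB hn ha hb L) | move: (lexB hn hb ha L)].
    case=> [[hb0 han]|[ha0 [hb1 hn2]]]; subst.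
      by exists a => //; lia.
    by exists 1 => //; [lia | rewrite orep_sym].
  case=> [[ha0 hbn]|[hb0 [ha1 hn2]]]; subst.
    by exists b; [lia | rewrite orep_sym].
  by exists 1 => //; lia.
case=> k hk ->; rewrite orep_lt transp_mu; try lia.
by rewrite orep_mu_11 // lexB' //; lia.
Qed.

Fixpoint wch (n m : nat) : seq vtx :=
  match m with
  | 0 => [:: Bd (n + n)]
  | m'.+1 => Blk n (n - m') :: Wht n (n - m') :: wch n m'
  end.

Definition isBd (v : vtx) := if v is Bd _ then true else false.
Definition rowof (v : vtx) := match v with Bd _ => 0 | Blk r _ => r | Wht r _ => r end.

Lemma pf_cons n f v p : p \in paths_from n f.+1 v <->
  exists w, [/\ w \in verts n, edge n v w &
    if w is Bd _ then p = [:: w] else exists2 p', p = w :: p' & p' \in paths_from n f w].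
Proof.
split.
  case/flatten_mapP => w; rewrite mem_filter => /andP[e wv] pin.
  exists w; split => //; case: w e wv pin => [t|r c|r c] _ _; rewrite ?inE.
  - by move/eqP.
  - by case/mapP => p' ? ->; exists p'.
  - by case/mapP => p' ? ->; exists p'.
case=> w [wv e H]; apply/flatten_mapP; exists w; first by rewrite mem_filter e wv.
case: w wv e H => [t|r c|r c] _ _ H.
- by rewrite H inE.
- by case: H => p' -> ?; apply: map_f.
- by case: H => p' -> ?; apply: map_f.
Qed.

Lemma claimA n f : forall v p, p \in paths_from n f v -> ~~ isBd v ->
  forall t, last v p = Bd t -> t <= n + rowof v.
Proof.
elim: f => [|f IH] v p //.
case/pf_cons => w [_ e H] nb t.
case: v nb e => [s|r c|r c] //= _.
- case: w H => [t'|r' c'|r' c'] H //= /and4P[_ _ /eqP ? /eqP ?]; subst.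
  case: H => p' -> pin /= hl.
  by have := IH _ _ pin isT t hl.
- case: w H => [t'|r' c'|r' c'] H //=.
    by move/and3P => [_ _ /eqP te]; rewrite H te /= => [[<-]].
  move/and3P => [/andP[h1 h2] _ /orP[/and3P[h3 /eqP ? /eqP ?]|/and3P[h3 /eqP ? /eqP ?]]]; subst;
  case: H => p' -> pin /= hl; have := IH _ _ pin isT t hl => /=; lia.
Qed.

Lemma claimB n f : 1 <= n ->
  (forall c p, 1 <= c <= n -> p \in paths_from n f (Wht n c) ->
     last (Wht n c) p = Bd (n + n) -> p = wch n (n - c)) /\
  (forall c p, 1 <= c <= n -> p \in paths_from n f (Blk n c) ->
     last (Blk n c) p = Bd (n + n) -> p = Wht n c :: wch n (n - c)).
Proof.
move=> hn; elim: f => [|f [IH1 IH2]]; first by split.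
split.
  move=> c p hc /pf_cons [w [_ e H]].
  case: w H e => [t|r' c'|r' c'] H //=.
    move/and3P => [_ /eqP ce /eqP te]; rewrite H ce te subnn /= => _ //.
  move/and3P => [_ _ /orP[/and3P[h3 /eqP ? /eqP ?]|/and3P[h3 /eqP ? /eqP ?]]]; subst;
    case: H => p' -> pin /= hl.
    by have := claimA pin isT hl => /=; lia.
  rewrite (IH2 _ _ _ pin hl); last by lia.
  have -> : n - c = (n - c.+1).+1 by lia.
  by rewrite /= (_ : n - (n - c.+1) = c.+1) //; lia.
move=> c p hc /pf_cons [w [_ e H]].
case: w H e => [t|r' c'|r' c'] H //=.
move/and4P => [_ _ /eqP ? /eqP ?]; subst; case: H => p' -> pin /= hl.
by rewrite (IH1 _ _ hc pin hl).
Qed.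

Lemma Blk_in_verts n r c : 1 <= r <= n -> 1 <= c <= n -> Blk r c \in verts n.
Proof.
move=> hr hc; rewrite mem_cat; apply/orP; right.
apply/flatten_mapP; exists r; first by rewrite mem_iota; lia.
apply/flatten_mapP; exists c; first by rewrite mem_iota; lia.
by rewrite inE eqxx.
Qed.

Lemma Wht_in_verts n r c : 1 <= r <= n -> 1 <= c <= n -> Wht r c \in verts n.
Proof.
move=> hr hc; rewrite mem_cat; apply/orP; right.
apply/flatten_mapP; exists r; first by rewrite mem_iota; lia.
apply/flatten_mapP; exists c; first by rewrite mem_iota; lia.
by rewrite !inE eqxx orbT.
Qed.

Lemma Bd_in_verts n t : 1 <= t <= 2 * n -> Bd t \in verts n.
Proof.
move=> ht; rewrite mem_cat; apply/orP; left.
by apply/map_f; rewrite mem_iota; lia.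
Qed.

Lemma claimC n m : m < n ->
  (forall f, 2 * m + 1 <= f -> wch n m \in paths_from n f (Wht n (n - m))) /\
  (forall f, 2 * m + 2 <= f -> Wht n (n - m) :: wch n m \in paths_from n f (Blk n (n - m))).
Proof.
elim: m => [|m IH] hm.
  have P1 : forall f, 2 * 0 + 1 <= f -> wch n 0 \in paths_from n f (Wht n (n - 0)).
    case=> [|f] hf; first by lia.
    apply/pf_cons; exists (Bd (n + n)); split => //.
      by apply: Bd_in_verts; lia.
    by rewrite /edge; apply/and3P; split; [lia|lia|apply/eqP; lia].
  split => //.
  case=> [|f] hf; first by lia.
  apply/pf_cons; exists (Wht n (n - 0)); split.
  - by apply: Wht_in_verts; lia.
  - by rewrite /edge !eqxx !andbT; apply/andP; split; lia.
  - by exists (wch n 0) => //; apply: P1; lia.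
have [IH1 IH2] := IH ltac:(lia).
have P1 : forall f, 2 * m.+1 + 1 <= f -> wch n m.+1 \in paths_from n f (Wht n (n - m.+1)).
  case=> [|f] hf; first by lia.
  apply/pf_cons; exists (Blk n (n - m)); split.
  - by apply: Blk_in_verts; lia.
  - rewrite /edge; lia.
  - by exists (Wht n (n - m) :: wch n m) => //; apply: IH2; lia.
split => //.
case=> [|f] hf; first by lia.
apply/pf_cons; exists (Wht n (n - m.+1)); split.
- by apply: Wht_in_verts; lia.
- by rewrite /edge !eqxx !andbT; apply/andP; split; lia.
- by exists (wch n m.+1) => //; apply: P1; lia.
Qed.

Definition P0 n j := Bd j.+1 :: Blk n (n - j) :: Wht n (n - j) :: wch n j.

Lemma P0_in_paths n j : 1 <= n -> j < n -> P0 n j \in paths n j.+1.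
Proof.
move=> hn hj; rewrite /paths; apply: map_f.
have -> : 2 * n * n + 2 = (2 * n * n + 1).+1 by lia.
apply/pf_cons; exists (Blk n (n - j)); split.
- by apply: Blk_in_verts; lia.
- by rewrite /edge; lia.
- exists (Wht n (n - j) :: wch n j) => //.
  have [_ C2] := claimC (n := n) hj; apply: C2; nia.
Qed.

Lemma paths_last n j P : 1 <= n -> j < n -> P \in paths n j.+1 ->
  last (Bd 0) P = Bd (n + n) -> P = P0 n j.
Proof.
move=> hn hj /mapP [p pin ->] /= hl.
move: pin; have -> : 2 * n * n + 2 = (2 * n * n + 1).+1 by lia.
case/pf_cons => w [_ e H].
case: w e H hl => [t|r c|r c] //= /and3P[h1 /eqP hr /eqP hc] [p' -> pin] /= hl.
rewrite hr in pin hl; have [_ B2] := claimB (2 * n * n + 1) hn.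
rewrite (B2 _ _ _ pin hl); last by lia.
have e1 : n.+1 - j.+1 = n - j by lia.
have e2 : n - (n - j) = j by lia.
by rewrite hc hr e1 e2.
Qed.

Lemma mem_wch n m v : m <= n -> v \in wch n m ->
  v = Bd (n + n) \/ exists c, n - m < c <= n /\ (v = Blk n c \/ v = Wht n c).
Proof.
elim: m => [|m IH] hm /=; first by rewrite inE => /eqP; left.
have hm' : m <= n by lia.
rewrite !inE => /orP[/eqP->|/orP[/eqP->|/(IH hm')]].
- by right; exists (n - m); split => //; [lia | left].
- by right; exists (n - m); split => //; [lia | right].
- case=> [->|[c [hc hv]]]; [by left | right; exists c; split => //; lia].
Qed.

Lemma uniq_wch n m : m <= n -> uniq (wch n m).
Proof.
elim: m => [|m IH] hm //=.
have hm' : m <= n by lia.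
rewrite IH ?andbT //.
apply/andP; split.
  rewrite inE negb_or; apply/andP; split; first by apply/eqP.
  by apply/negP => /(mem_wch hm') [//|[c [hc [[e]|//]]]]; lia.
by apply/negP => /(mem_wch hm') [//|[c [hc [//|[e]]]]]; lia.
Qed.

Lemma uniq_P0 n j : 1 <= n -> j < n -> uniq (P0 n j).
Proof.
move=> hn hj; have hj' : j <= n by lia.
rewrite /P0 /= uniq_wch ?andbT //.
rewrite !inE !negb_or; apply/and3P; split.
- apply/and3P; split; try by apply/eqP.
  by apply/negP => /(mem_wch hj') [[e]|[c [_ [//|//]]]]; lia.
- apply/andP; split; first by apply/eqP.
  by apply/negP => /(mem_wch hj') [//|[c [hc [[e]|//]]]]; lia.
- by apply/negP => /(mem_wch hj') [//|[c [hc [//|[e]]]]]; lia.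
Qed.

Arguments P0 : simpl never.

Lemma nth_lam n j r : j < n -> r < n ->
  nth 0 (lam n 0 j) r = if r < j then n else if r < n.-1 then n.-1 else 0.
Proof.
move=> hj hr; rewrite /lam nth_cat size_nseq.
case: (ltnP r j) => h1; first by rewrite nth_nseq h1.
rewrite nth_cat size_nseq.
case: (ltnP (r - j) (n - 1 - j)) => h2.
  by rewrite nth_nseq h2 ifT //; lia.
rewrite ifF; last by lia.
by have -> : r - j - (n - 1 - j) = 0 by lia.
Qed.

Lemma J_eq n j : j < n ->
  subset_of n (lam n 0 j) = iota 1 j ++ iota j.+2 (n - 1 - j) ++ [:: n + n].
Proof.
move=> hj; apply: (@eq_from_nth _ 0).
  by rewrite size_map !size_cat !size_iota /=; lia.
move=> r; rewrite size_map size_iota => hr.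
rewrite (nth_map 0) ?size_iota // nth_iota // add0n nth_lam //.
rewrite nth_cat size_iota.
case: (ltnP r j) => h1; first by rewrite nth_iota //; lia.
rewrite nth_cat size_iota.
case: (ltnP (r - j) (n - 1 - j)) => h2.
  by rewrite nth_iota // ifT; lia.
rewrite ifF; last by lia.
have -> : r - j - (n - 1 - j) = 0 by lia.
rewrite /=; lia.
Qed.

Lemma sources_eq n j : j < n -> sources n (subset_of n (lam n 0 j)) = [:: j.+1].
Proof.
move=> hj; rewrite /sources J_eq //.
rewrite (@eq_in_filter _ _ (pred1 j.+1)) ?filter_pred1_uniq ?iota_uniq //.
  by rewrite mem_iota; lia.
move=> s; rewrite mem_iota !mem_cat !mem_iota !inE => hs; lia.
Qed.

Lemma sinks_eq n j : 1 <= n -> j < n -> sinks n (subset_of n (lam n 0 j)) = [:: n + n].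
Proof.
move=> hn hj; rewrite /sinks J_eq // !filter_cat.
have z : forall s, {in s, forall t, t <= n} -> [seq t <- s | n < t] = [::].
  move=> s hs; rewrite (@eq_in_filter _ _ pred0) ?filter_pred0 //.
  by move=> t /hs ht /=; lia.
rewrite (z (iota 1 j)); last by move=> t; rewrite mem_iota; lia.
rewrite (z (iota j.+2 (n - 1 - j))); last by move=> t; rewrite mem_iota; lia.
by rewrite /= ifT //; lia.
Qed.

Lemma last_wch n m x : last x (wch n m) = Bd (n + n).
Proof. by elim: m x => [|m IH] x //=. Qed.

Lemma flows_char n j F : 1 <= n -> j < n ->
  F \in flows n (subset_of n (lam n 0 j)) <-> F = [:: P0 n j].
Proof.
move=> hn hj; rewrite /flows sources_eq // sinks_eq // /= mem_filter.
split.
  case/andP => /andP[pe u] /flatten_mapP [P pin]; rewrite inE => /eqP eF; subst F.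
  move: (perm_mem pe (last (Bd 0) P)) => /=; rewrite !inE eqxx => /esym/eqP hl.
  by rewrite (paths_last hn hj pin hl).
move=> ->; apply/andP; split.
  have lP : last (Bd 0) (P0 n j) = Bd (n + n) by rewrite /P0 /= last_wch.
  have -> : flatten [:: P0 n j] = P0 n j by rewrite /= cats0.
  by rewrite !map_cons lP perm_refl uniq_P0.
by apply/flatten_mapP; exists (P0 n j); [apply: P0_in_paths | rewrite inE].
Qed.

Import GRing.Theory.

Arguments P0 : simpl never.

Lemma msupp_fp n j : 1 <= n -> j < n ->
  msupp (flowpoly n (subset_of n (lam n 0 j))) = [:: flow_mon n [:: P0 n j]].
Proof.
move=> hn hj; rewrite /flowpoly.
have -> : (\sum_(F <- flows n (subset_of n (lam n 0 j))) 'X_[flow_mon n F] =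
          \sum_(F <- flows n (subset_of n (lam n 0 j))) ('X_[flow_mon n [:: P0 n j]] : {mpoly int[nvar n]}))%R.
  rewrite big_seq [RHS]big_seq; apply: eq_bigr => F /(flows_char _ hn hj) -> //.
rewrite big_const_seq count_predT iter_addr_0 -scaler_nat msuppMCX //.
rewrite Num.Theory.pnatr_eq0 -lt0n.
case e: (flows n (subset_of n (lam n 0 j))) => [|x s] //.
have := (flows_char (n := n) (j := j) [:: P0 n j] hn hj).2 erefl.
by rewrite e.
Qed.

Lemma val_eq n j : 1 <= n -> j < n ->
  val_corect n (subset_of n (lam n 0 j)) =
  [seq (flow_mon n [:: P0 n j] : 'X_{1..nvar n}) i | i <- enum 'I_(nvar n)].
Proof. by move=> hn hj; rewrite /val_corect msupp_fp. Qed.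

Lemma has_wch n m x y : 1 <= n ->
  has (fun v => (y < (pos n v).1) && (x < (pos n v).2)) (wch n m) = (y < n) && (x < n.+1).
Proof.
move=> hn; elim: m => [|m IH] /=.
  by rewrite /pos ifF /=; lia.
by rewrite IH; lia.
Qed.

Lemma has_P0 n j x y : 1 <= n -> j < n -> x <= n -> y <= n ->
  has (fun v => (y < (pos n v).1) && (x < (pos n v).2)) (P0 n j) = (y < n) || (x < n - j).
Proof.
move=> hn hj hx hy; rewrite /P0 /= has_wch // /pos ifT /=; lia.
Qed.

Lemma mem_LF n j l : 1 <= n -> j < n ->
  l \in left_faces n (P0 n j) <->
  exists x y, [/\ x <= n, y <= n, (y < n) || (x < n - j) & l = mu n (n - x) (n - y)].
Proof.
move=> hn hj; rewrite /left_faces mem_undup; split.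
  case/flatten_mapP => x; rewrite mem_iota => hx /mapP [y].
  rewrite mem_filter mem_iota => /andP[hh hy] ->.
  rewrite has_P0 in hh; try lia.
  by exists x, y; split => //; lia.
case=> x [y [hx hy hh ->]]; apply/flatten_mapP; exists x; first by rewrite mem_iota; lia.
by apply: map_f; rewrite mem_filter mem_iota has_P0 // hh; lia.
Qed.

Lemma countQ n j c d : 1 <= n -> j < n -> c <= n -> d <= n -> 0 < c + d ->
  count (fun l => nonempty l && (orep n l == orep n (mu n c d))) (left_faces n (P0 n j)) =
  count (fun l => (l == mu n c d) || (l == mu n d c)) (left_faces n (P0 n j)).
Proof.
move=> hn hj hc hd hcd; apply: eq_in_count => l /(mem_LF _ hn hj) [x [y [hx hy _ ->]]].
rewrite orep_mu_eq; try lia.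
case e: ((mu n (n - x) (n - y) == mu n c d) || (mu n (n - x) (n - y) == mu n d c));
  last by rewrite andbF.
by rewrite andbT; case/orP: e => /eqP ->; rewrite nonempty_mu //; lia.
Qed.

Lemma count2 (s : seq (seq nat)) u v : uniq s -> u != v ->
  count (fun l => (l == u) || (l == v)) s = (u \in s) + (v \in s).
Proof.
move=> us nuv; have := count_predUI (pred1 u) (pred1 v) s.
rewrite (@eq_count _ (predI (pred1 u) (pred1 v)) pred0); last first.
  by move=> l /=; case: (eqVneq l u) => // ->; rewrite (negbTE nuv).
by rewrite count_pred0 addn0 !count_uniq_mem // => <-.
Qed.

Lemma col_nth n (j : nat) : j < n -> nth (0, 0) (col_index n) j = (0, n - j.+1).
Proof.
case: n => // n hj; rewrite /col_index.
have -> : iota 0 n.+1 = 0 :: iota 1 n by [].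
rewrite map_cons /= -[0 :: iota 1 n]/(iota 0 n.+1) nth_cat size_map size_rev size_iota hj.
rewrite (nth_map 0) ?size_rev ?size_iota // nth_rev ?size_iota // nth_iota //; last by lia.
Qed.

Lemma mem_mu_c0 n jl c : 1 <= c -> c < n -> jl < n ->
  (mu n c 0 \in left_faces n (P0 n jl)) = (jl < c).
Proof.
move=> h1 h2 hj; have hn : 1 <= n by lia.
apply/idP/idP.
  case/(mem_LF _ hn hj) => x [y [hx hy hh /esym e]].
  have e1 := @mu_eq_nth n (n - x) (n - y) c 0 ltac:(lia) ltac:(lia) e n.-1 ltac:(lia).
  have e2 := @mu_eq_nth n (n - x) (n - y) c 0 ltac:(lia) ltac:(lia) e c ltac:(lia).
  move: e1 e2; rewrite ltnn; case: (ltnP n.-1 (n - x)); case: (ltnP n.-1 c);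
    case: (ltnP c (n - x)); lia.
move=> hjc; apply/(mem_LF _ hn hj); exists (n - c), n; split; try lia.
by rewrite subnn (_ : n - (n - c) = c) //; lia.
Qed.

Lemma mem_mu_0c n jl c : 1 <= c -> c <= n -> jl < n ->
  mu n 0 c \in left_faces n (P0 n jl).
Proof.
move=> h1 h2 hj; have hn : 1 <= n by lia.
apply/(mem_LF _ hn hj); exists n, (n - c); split; try lia.
by rewrite subnn (_ : n - (n - c) = c) //; lia.
Qed.

Theorem mainTheorem5 (n : nat) (i j : 'I_(nvar n)) :
  1 <= n -> i < n -> j < n ->
  Mn n i j = (if i.+1 == n then 1 else if j.+1 <= n - i.+1 then 1 else 2).
Proof.
move=> hn hi hj.
rewrite /Mn mxE col_nth //.
change (nth 0 (val_corect n (subset_of n (lam n 0 (n - j.+1)))) i =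
  (if i.+1 == n then 1 else if j.+1 <= n - i.+1 then 1 else 2)).
have hjl : n - j.+1 < n by lia.
rewrite val_eq // (nth_map i) ?size_enum_ord // nth_ord_enum mnmE.
rewrite /flow_exp big_cons big_nil addn0.
case: (eqVneq i.+1 n) => hin.
  have ei : (i : nat) = n.-1 by lia.
  rewrite ei row_hook // countQ //.
  rewrite (@eq_count _ _ (pred1 (mu n 1 1))); last by move=> l /=; rewrite orbb.
  rewrite count_uniq_mem ?undup_uniq //.
  have -> : mu n 1 1 \in left_faces n (P0 n (n - j.+1)).
    apply/(mem_LF _ hn hjl); exists n.-1, n.-1; split; try lia.
    by rewrite (_ : n - n.-1 = 1) //; lia.
  by [].
have ei : (i : nat) = i.+1.-1 by [].
rewrite ei row_c; try lia.
rewrite countQ; try lia.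
rewrite count2 ?undup_uniq //; last first.
  apply/negP => /eqP e.
  have := @mu_eq_nth n i.+1 0 0 i.+1 ltac:(lia) ltac:(lia) e n.-1 ltac:(lia).
  rewrite ltn0; case: (ltnP n.-1 i.+1); lia.
rewrite mem_mu_c0 ?mem_mu_0c //; try lia.
case: (ltnP (n - j.+1) i.+1) => h; rewrite /=; case: ifP; lia.
Qed.
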